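(* Every bounded continuous valuation $\nu$ on Johnstone's dcpo $\mathcal J$ (with the Scott topology) is point-continuous. Moreover, there exist a discrete valuation $\theta$ on $\mathcal J$ and a nonnegative real number $r$ such that $\nu=\theta+r\mu$, where $\mu(U)=1$ for every non-empty Scott-open $U\subseteq\mathcal J$ and $\mu(\emptyset)=0$.
   Context: Johnstone's dcpo: $\mathcal J=\mathbb N\times(\mathbb N\cup\{\infty\})$ ordered by $(a,b)\le(c,d)$ iff either ($a=c$ and $b\le d$) or ($d=\infty$ and $b\le c$). A valuation on a space $X$ is a map $\nu:\mathcal OX\to[0,\infty]$ with $\nu(\emptyset)=0$, monotone and modular ($\nu(U)+\nu(V)=\nu(U\cup V)+\nu(U\cap V)$); continuous if it preserves directed suprema of open sets; bounded if $\nu(X)<\infty$. $\delta_x$ is the Dirac valuation at $x$. A discrete valuation is one of the form $\sum_{i=1}^\infty r_i\delta_{x_i}=\sup_n\sum_{i=1}^n r_i\delta_{x_i}$ with $r_i\in[0,\infty)$. A valuation $\nu$ is point-continuous if for every open $U$ and every real $r$ with $0\le r<\nu(U)$ there is a finite subset $A\subseteq U$ such that $\nu(V)>r$ for every open $V\supseteq A$. *)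

(* Defs.v *)
From HB Require Import structures.
From mathcomp Require Import all_boot all_order all_algebra.
From mathcomp Require Import all_classical all_reals ereal.
Set Implicit Arguments. Unset Strict Implicit. Unset Printing Implicit Defensive.
Import Order.TTheory GRing.Theory Num.Theory.
Local Open Scope classical_set_scope.
Local Open Scope ring_scope.

(* N ∪ {∞}: [None] is ∞, [Some n] is n. *)
Definition Ninf := option nat.

Definition le_Ninf (b d : Ninf) : Prop :=
  match d, b with
  | None, _ => True
  | Some d', Some b' => (b' <= d')%N
  | Some _, None => False
  end.

Definition le_Ninf_nat (b : Ninf) (c : nat) : Prop :=
  match b with Some b' => (b' <= c)%N | None => False end.

Definition J := (nat * Ninf)%type.

Definition leJ (p q : J) : Prop :=
  let: (a, b) := p in let: (c, d) := q in
  (a = c /\ le_Ninf b d) \/ (d = None /\ le_Ninf_nat b c).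

Definition directed_set {T} (le : T -> T -> Prop) (D : set T) : Prop :=
  (exists x, D x) /\
  forall a b, D a -> D b -> exists c, D c /\ le a c /\ le b c.

Definition is_sup {T} (le : T -> T -> Prop) (D : set T) (s : T) : Prop :=
  (forall x, D x -> le x s) /\ (forall u, (forall x, D x -> le x u) -> le s u).

Definition scott_open {T} (le : T -> T -> Prop) (U : set T) : Prop :=
  (forall x y, U x -> le x y -> U y) /\
  (forall D s, directed_set le D -> is_sup le D s -> U s ->
     exists x, D x /\ U x).

Definition openJ (U : set J) : Prop := scott_open leJ U.

Section Valuations.
Context {R : realType}.
Local Open Scope ereal_scope.

Definition valuationJ (nu : set J -> \bar R) : Prop :=
  nu set0 = 0 /\
  (forall U, openJ U -> 0 <= nu U) /\
  (forall U V, openJ U -> openJ V -> U `<=` V -> nu U <= nu V) /\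
  (forall U V, openJ U -> openJ V -> nu U + nu V = nu (U `|` V) + nu (U `&` V)).

Definition continuous_valJ (nu : set J -> \bar R) : Prop :=
  forall F : set (set J),
    (forall U, F U -> openJ U) ->
    directed_set (fun U V => U `<=` V) F ->
    nu (\bigcup_(U in F) U) = ereal_sup (nu @` F).

Definition bounded_valJ (nu : set J -> \bar R) : Prop := nu setT < +oo.

Definition point_continuousJ (nu : set J -> \bar R) : Prop :=
  forall (U : set J) (r : R), openJ U -> (0 <= r)%R -> r%:E < nu U ->
    exists A : set J, finite_set A /\ A `<=` U /\
      forall V, openJ V -> A `<=` V -> r%:E < nu V.

Definition diracJ (x : J) (U : set J) : \bar R :=
  if `[< U x >] then 1 else 0.

Definition discrete_valJ (r : nat -> R) (x : nat -> J) (U : set J) : \bar R :=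
  ereal_sup (range (fun n => \sum_(i < n) ((r i)%:E * diracJ (x i) U))).

Definition muJ (U : set J) : \bar R := if `[< U !=set0 >] then 1 else 0.

End Valuations.

(* Main.v *)
Require Import Defs.
From HB Require Import structures.
From mathcomp Require Import all_boot all_order all_algebra.
From mathcomp Require Import all_classical all_reals ereal.
From mathcomp Require Import zify lra.
Import Order.TTheory GRing.Theory Num.Theory.
Local Open Scope classical_set_scope.
Local Open Scope ring_scope.

Definition ole (x y : option nat) : bool :=
  match x, y with
  | _, None => true
  | None, Some _ => false
  | Some a, Some b => (a <= b)%N
  end.
Definition omin (x y : option nat) := if ole x y then x else y.
Definition omax (x y : option nat) := if ole x y then y else x.

Lemma ole_refl x : ole x x.
Proof. by case: x => //= a. Qed.
Lemma ole_trans x y z : ole x y -> ole y z -> ole x z.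
Proof. by case: x; case: y; case: z => //= a b c; apply: leq_trans. Qed.
Arguments ole_trans {x y z}.
Lemma ole_total x y : ole x y || ole y x.
Proof. by case: x; case: y => //= a b; apply: leq_total. Qed.
Lemma ole_anti x y : ole x y -> ole y x -> x = y.
Proof. by case: x; case: y => //= a b h1 h2; congr Some; apply/eqP; rewrite eqn_leq h1 h2. Qed.

Definition Sh (h : nat -> option nat) : set J := fun p =>
  let: (a, b) := p in
  match b with
  | Some m => ole (h a) (Some m)
  | None => h a != None
  end.

Definition valid (h : nat -> option nat) : Prop :=
  forall a n, h a = Some n -> forall c, (n <= c)%N -> h c != None.

Definition hmin (h1 h2 : nat -> option nat) := fun a => omin (h1 a) (h2 a).
Definition hmax (h1 h2 : nat -> option nat) := fun a => omax (h1 a) (h2 a).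
Definition hle (h1 h2 : nat -> option nat) := forall a, ole (h1 a) (h2 a).

Lemma Sh_ext h1 h2 : h1 =1 h2 -> Sh h1 = Sh h2.
Proof. by move=> e; apply/funext => -[a b] /=; rewrite e. Qed.

Lemma ole_None x : ole x None. Proof. by case: x. Qed.

Lemma ole_Some_ne x m : ole x (Some m) -> x != None.
Proof. by case: x. Qed.

Lemma Sh_min h1 h2 : Sh (hmin h1 h2) = Sh h1 `|` Sh h2.
Proof.
apply/funext => -[a [m|]] /=; rewrite /hmin /omin; apply/propext.
- case: ifP => h12; split.
  + by left.
  + case => // h2m; exact: ole_trans h12 h2m.
  + by right.
  + case => // h1m; move: (ole_total (h1 a) (h2 a)); rewrite h12 /= => h21.
    exact: ole_trans h21 h1m.
- case: ifP => h12; split.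
  + by left.
  + case => // h2m; move: h12 h2m; case: (h1 a) => //; by case: (h2 a).
  + by right.
  + case => // h1m; move: h12 h1m; case: (h1 a) => //; by case: (h2 a).
Qed.

Lemma Sh_max h1 h2 : Sh (hmax h1 h2) = Sh h1 `&` Sh h2.
Proof.
apply/funext => -[a [m|]] /=; rewrite /hmax /omax; apply/propext.
- case: ifP => h12; split.
  + move=> h2m; split => //; exact: ole_trans h12 h2m.
  + by case.
  + move=> h1m; split => //; move: (ole_total (h1 a) (h2 a)); rewrite h12 /= => h21.
    exact: ole_trans h21 h1m.
  + by case.
- case: ifP => h12; split.
  + move=> h2m; split => //; move: h12 h2m; case: (h1 a) => //; by case: (h2 a).
  + by case.
  + move=> h1m; split => //; move: h12 h1m; case: (h1 a) => //; by case: (h2 a).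
  + by case.
Qed.

Lemma Sh_sub h1 h2 : hle h1 h2 -> Sh h2 `<=` Sh h1.
Proof.
move=> H [a [m|]] /=.
- by move=> h2m; exact: ole_trans (H a) h2m.
- by move: (H a); case: (h1 a) => //; case: (h2 a).
Qed.

Lemma omax_Some x y n : omax x y = Some n ->
  exists n1 n2, [/\ x = Some n1, y = Some n2, (n1 <= n)%N & (n2 <= n)%N].
Proof.
rewrite /omax; case: x => [x|]; case: y => [y|] //=; case: ifP => // xy [<-].
- by exists x, y; split.
- exists x, y; split => //; rewrite leqNgt; apply/negP => /ltnW; by rewrite xy.
Qed.

Lemma valid_max h1 h2 : valid h1 -> valid h2 -> valid (hmax h1 h2).
Proof.
move=> v1 v2 a n; rewrite /hmax => /omax_Some [n1 [n2 [e1 e2 l1 l2]]] c nc.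
have := v1 a n1 e1 c (leq_trans l1 nc).
have := v2 a n2 e2 c (leq_trans l2 nc).
by rewrite /omax; case: ifP; case: (h1 c); case: (h2 c).
Qed.


Lemma leJ_Some (x : J) a n : leJ x (a, Some n) ->
  exists m, x = (a, Some m) /\ (m <= n)%N.
Proof.
case: x => c [m|] /= [[-> h]|[]] //; by exists m.
Qed.

Arguments leJ_Some {x a n}.
Lemma leJ_None (x : J) a : leJ x (a, None) ->
  x = (a, None) \/ exists c m, x = (c, Some m) /\ ((m <= a)%N \/ c = a).
Proof.
case: x => c [m|] /= [[-> h]|[_ h]] //.
- by right; exists a, m; split => //; right.
- by right; exists c, m; split => //; left.
- by left.
Qed.

Arguments leJ_None {x a}.
Lemma open_Sh h : valid h -> openJ (Sh h).
Proof.
move=> vh; split.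
- move=> [a b] [c d] /= hx [[<- bd]|[-> bc]].
  + case: d bd => [d|] /=.
    * by case: b hx => [b|] //= hx bd; exact: (ole_trans (z := Some d) hx bd).
    * by case: b hx => [b|] //= hx _; exact: ole_Some_ne hx.
  + case: b hx bc => [b|] //= hx bc.
    move: hx; case E: (h a) => [k|] //= kb.
    exact: vh E c (leq_trans kb bc).
- move=> D [a b] [[x0 Dx0] _] [ubD lub] hs.
  apply: contrapT => nD.
  have nDx : forall x, D x -> ~ Sh h x by move=> x Dx Shx; apply: nD; exists x.
  case: b hs ubD lub => [n|] hs ubD lub.
  + move: hs => /=; case E: (h a) => [k|] //= kn.
    have Dle : forall x, D x -> exists m, x = (a, Some m) /\ (m < k)%N.
      move=> x Dx; have [m [xe mn]] := leJ_Some (ubD x Dx).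
      exists m; split => //; move: (nDx x Dx); rewrite xe /= E /=.
      by rewrite ltnNge => /negP.
    have [m [x0e mk]] := Dle x0 Dx0.
    have := lub (a, Some k.-1) => /= /(_ _).
    case.
      move=> x Dx; have [m' [-> m'k]] := Dle x Dx; left; split => //=.
      by rewrite -ltnS prednK // (leq_ltn_trans _ mk).
    * move=> [_ /= nk]; have := leq_trans kn nk; move: mk; clear; lia.
    * by case.
  + move: hs => /=; case E: (h a) => [k|] //= _.
    have Dle : forall x, D x -> exists c m, x = (c, Some m) /\ (m <= a + k)%N.
      move=> x Dx; case: (leJ_None (ubD x Dx)) => [xe|[c [m [xe hm]]]].
      * by exfalso; apply: (nDx x Dx); rewrite xe /= E.
      * exists c, m; split => //; case: hm => [ma|ca].
        - exact: leq_trans ma (leq_addr _ _).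
        - move: (nDx x Dx); rewrite xe ca /= E /= => /negP; rewrite -ltnNge => mk.
          exact: leq_trans (ltnW mk) (leq_addl _ _).
    have := lub ((a + k).+1, None) => /= /(_ _).
    case.
      move=> [c' d'] Dx; have [c [m [[-> ->] ma]]] := Dle _ Dx; right; split => //=.
      exact: leq_trans ma (leqnSn _).
    * move=> [ae _]; move: ae; clear; lia.
    * by case.
Qed.

Lemma open_up U x y : openJ U -> U x -> leJ x y -> U y.
Proof. by move=> [up _]; apply: up. Qed.

Arguments open_up {U x y}.
Lemma open_P4 U a : openJ U -> U (a, None) -> exists n, U (a, Some n).
Proof.
move=> [_ sc] Ua.
pose D : set J := fun x => x.1 = a /\ x.2 != None.
have dD : directed_set leJ D.
  split; first by exists (a, Some 0%N).
  move=> [a1 [n1|]] [a2 [n2|]] [/= e1 _] [/= e2 _] //.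
  exists (a, Some (maxn n1 n2)); split => //; rewrite e1 e2 /=; split; left; split => //.
  - exact: leq_maxl.
  - exact: leq_maxr.
have sD : is_sup leJ D (a, None).
  split.
  - by move=> [c [m|]] [/= -> _] //; left.
  - move=> [c [d|]] ub.
    + by have [] := ub (a, Some d.+1) (conj erefl isT) => /= [[_]|[]]; rewrite ?ltnn.
    + case: (ub (a, Some c.+1) (conj erefl isT)) => /= [[-> _]|[_]].
      * by left.
      * by rewrite ltnn.
have [[c [m|]] [[/= ce cn] Ux]] := sc D _ dD sD Ua; last by [].
by exists m; rewrite -ce.
Qed.

Arguments open_P4 {U a}.
Definition hU (U : set J) (a : nat) : option nat :=
  match pselect (exists n, (fun n => `[< U (a, Some n) >]) n) with
  | left e => Some (ex_minn e)
  | right _ => None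
  end.

Lemma Sh_of_open U : openJ U -> valid (hU U) /\ U = Sh (hU U).
Proof.
move=> oU.
have key : forall a m, U (a, Some m) <-> ole (hU U a) (Some m).
  move=> a m; rewrite /hU; case: pselect => [e|ne] /=.
  - case: ex_minnP => n /asboolP Un mn; split.
    + by move=> Um; apply: mn; apply/asboolP.
    + by move=> nm; apply: open_up oU Un _; left.
  - split => // Um; exfalso; apply: ne; exists m; exact/asboolP.
have key2 : forall a, U (a, None) <-> hU U a != None.
  move=> a; split.
  - move=> /(open_P4 oU) [n Un]; have := (proj1 (key a n) Un).
    exact: ole_Some_ne.
  - case E: (hU U a) => [n|] // _.
    have : U (a, Some n) by apply/key; rewrite E /=.
    by move=> Un; apply: open_up oU Un _; left.
split.
- move=> a n E c nc.
  have Un : U (a, Some n) by apply/key; rewrite E /=.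
  apply/key2; apply: open_up oU Un _; by right.
- apply/funext => -[a [m|]] /=; apply/propext.
  + exact: key.
  + exact: key2.
Qed.


Arguments Sh_ext {h1 h2}.
Arguments open_Sh {h}.
Arguments valid_max {h1 h2}.
Lemma omin_l x y : ole x y -> omin x y = x. Proof. by rewrite /omin => ->. Qed.
Lemma omin_r x y : ole y x -> omin x y = y.
Proof. by rewrite /omin; case: ifP => // xy yx; apply: ole_anti. Qed.
Lemma omax_r x y : ole x y -> omax x y = y. Proof. by rewrite /omax => ->. Qed.
Lemma omax_l x y : ole y x -> omax x y = x.
Proof. by rewrite /omax; case: ifP => // xy yx; apply: ole_anti. Qed.

Lemma valid_ext h1 h2 : h1 =1 h2 -> valid h1 -> valid h2.
Proof. by move=> e v a n; rewrite -e => E c nc; rewrite -e; apply: v E c nc. Qed.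

Lemma valid_min h1 h2 : valid h1 -> valid h2 -> valid (hmin h1 h2).
Proof.
move=> v1 v2 a n; rewrite /hmin /omin; case: ifP => _ E c nc.
- by move: (v1 a n E c nc); rewrite /omin; case: ifP; case: (h1 c); case: (h2 c).
- by move: (v2 a n E c nc); rewrite /omin; case: ifP; case: (h1 c); case: (h2 c).
Qed.

Arguments valid_ext {h1 h2}.
Arguments valid_min {h1 h2}.
Definition upd (h : nat -> option nat) c y := fun a => if a == c then y else h a.
Definition base (c : nat) : nat -> option nat := fun a => Some (maxn a c.+1).

Lemma valid_base_upd c x : valid (upd (base c) c x).
Proof.
move=> a n; rewrite /upd /base => E c' nc'.
case: (eqVneq c' c) => [ec|//]; subst c'.
move: E; case: (eqVneq a c) => [_|ac] E; first by rewrite E.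
move: E => [] En; subst; move: nc'; lia.
Qed.

Lemma openT : openJ setT.
Proof. split => // D s [[x Dx] _] _ _; by exists x. Qed.

Lemma ole_omax_l x y : ole x (omax x y).
Proof. rewrite /omax; case: ifP => // /negbT H; exact: ole_refl. Qed.
Lemma ole_omax_r x y : ole y (omax x y).
Proof.
rewrite /omax; case: ifP => [_|/negbT H]; first exact: ole_refl.
by move: (ole_total x y); rewrite (negbTE H).
Qed.

Section Val.
Variable R : realType.
Variable nu : set J -> \bar R.
Hypothesis Hval : valuationJ nu.
Hypothesis Hbd : bounded_valJ nu.

Definition L h : R := fine (nu (Sh h)).

Lemma nu_ge0 U : openJ U -> (0 <= nu U)%E.
Proof. move=> oU; have [_ [H _]] := Hval; exact: H. Qed.

Lemma nu_mono U V : openJ U -> openJ V -> U `<=` V -> (nu U <= nu V)%E.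
Proof. move=> oU oV UV; have [_ [_ [H _]]] := Hval; exact: H. Qed.

Lemma nu_fin U : openJ U -> nu U = (fine (nu U))%:E.
Proof.
move=> oU; have fin : nu U \is a fin_num.
  rewrite ge0_fin_numE; last exact: nu_ge0.
  apply: le_lt_trans Hbd; apply: nu_mono => //; exact: openT.
by rewrite fineK.
Qed.

Lemma nu_L h : valid h -> nu (Sh h) = (L h)%:E.
Proof. by move=> v; rewrite /L -nu_fin //; apply: open_Sh. Qed.

Lemma L_ge0 h : valid h -> 0 <= L h.
Proof. by move=> v; rewrite -lee_fin -nu_L //; apply: nu_ge0; apply: open_Sh. Qed.

Lemma L_mono h1 h2 : valid h1 -> valid h2 -> hle h1 h2 -> L h2 <= L h1.
Proof.
move=> v1 v2 le; rewrite -lee_fin -!nu_L //; apply: nu_mono; try exact: open_Sh.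
exact: Sh_sub.
Qed.

Lemma L_ext h1 h2 : h1 =1 h2 -> L h1 = L h2.
Proof. by move=> e; rewrite /L (Sh_ext e). Qed.

Lemma L_mod h1 h2 : valid h1 -> valid h2 ->
  L (hmin h1 h2) + L (hmax h1 h2) = L h1 + L h2.
Proof.
move=> v1 v2; case: Hval => _ [_ [_ md]].
have := md _ _ (open_Sh v1) (open_Sh v2).
rewrite -Sh_min -Sh_max !nu_L //; try exact: valid_min; try exact: valid_max.
by rewrite -!EFinD => -[->].
Qed.

Lemma CI0 V W c y : valid V -> valid W -> hle V W -> V c = W c ->
  valid (upd V c y) -> valid (upd W c y) ->
  L (upd V c y) - L V = L (upd W c y) - L W.
Proof.
move=> vV vW VW eVW vV' vW'.
case/orP: (ole_total (V c) y) => xy.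
- have e1 : hmin (upd V c y) W =1 V.
    move=> a; rewrite /hmin /upd; case: (eqVneq a c) => [->|_].
    + by rewrite -eVW omin_r.
    + by rewrite omin_l.
  have e2 : hmax (upd V c y) W =1 upd W c y.
    move=> a; rewrite /hmax /upd; case: (eqVneq a c) => [->|_].
    + by rewrite -eVW omax_l.
    + by rewrite omax_r.
  have := L_mod _ _ vV' vW; rewrite (L_ext _ _ e1) (L_ext _ _ e2); lra.
- have e1 : hmin V (upd W c y) =1 upd V c y.
    move=> a; rewrite /hmin /upd; case: (eqVneq a c) => [->|_].
    + by rewrite omin_r.
    + by rewrite omin_l.
  have e2 : hmax V (upd W c y) =1 W.
    move=> a; rewrite /hmax /upd; case: (eqVneq a c) => [->|_].
    + by rewrite eVW omax_l // -eVW.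
    + by rewrite omax_r.
  have := L_mod _ _ vV vW'; rewrite (L_ext _ _ e1) (L_ext _ _ e2); lra.
Qed.

Definition phi c x := L (upd (base c) c x).

Lemma CI V c y : valid V -> valid (upd V c y) ->
  L (upd V c y) - L V = phi c y - phi c (V c).
Proof.
move=> vV vV'.
pose B := upd (base c) c (V c).
have vB : valid B by apply: valid_base_upd.
pose W := hmax V B.
have vW : valid W by apply: valid_max.
have Wc : W c = V c by rewrite /W /hmax /B /upd eqxx omax_l // ole_refl.
have eW : hmax (upd V c y) (upd (base c) c y) =1 upd W c y.
  move=> a; rewrite /hmax /upd /W /hmax /B /upd; case: (eqVneq a c) => // _.
  by rewrite omax_l // ole_refl.
have vW' : valid (upd W c y).
  apply: valid_ext eW _; apply: valid_max => //; exact: valid_base_upd.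
have VW : hle V W by move=> a; apply: ole_omax_l.
have BW : hle B W by move=> a; apply: ole_omax_r.
have h1 := CI0 V W c y vV vW VW (esym Wc) vV' vW'.
have vB' : valid (upd B c y).
  apply: valid_ext (valid_base_upd c y) => a; rewrite /B /upd; by case: ifP.
have BcWc : B c = W c by rewrite Wc /B /upd eqxx.
have h2 := CI0 B W c y vB vW BW BcWc vB' vW'.
rewrite h1 /phi -h2.
congr (_ - _); apply: L_ext => a; rewrite /B /upd; by case: (a == c).
Qed.

End Val.


Definition mix (h1 h2 : nat -> option nat) (s : seq nat) :=
  fun c => if c \in s then h1 c else h2 c.

Section Tele.
Variable R : realType.
Variable nu : set J -> \bar R.
Hypothesis Hval : valuationJ nu.
Hypothesis Hbd : bounded_valJ nu.
Local Notation L := (@L R nu).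
Local Notation phi := (@phi R nu).

Lemma TL h1 h2 cs : uniq cs -> (forall c, c \notin cs -> h1 c = h2 c) ->
  (forall s, valid (mix h1 h2 s)) ->
  L h1 - L h2 = \sum_(c <- cs) (phi c (h1 c) - phi c (h2 c)).
Proof.
elim: cs h2 => [|c cs IH] h2 /=.
- move=> _ e _; rewrite big_nil (@L_ext R nu _ _ (fun a => e a isT)); lra.
- move=> /andP[ncs ucs] e vm.
  pose h2' := upd h2 c (h1 c).
  have e' : forall c', c' \notin cs -> h1 c' = h2' c'.
    move=> c' nc'; rewrite /h2' /upd; case: (eqVneq c' c) => [->//|ne].
    by apply: e; rewrite in_cons negb_or ne.
  have vm' : forall s, valid (mix h1 h2' s).
    move=> s; apply: valid_ext (vm (c :: s)) => a.
    rewrite /mix /h2' /upd in_cons; case: (eqVneq a c) => [->|] //=.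
    by case: (c \in s).
  have := IH h2' ucs e' vm'.
  have v2 : valid h2 by apply: valid_ext (vm [::]) => a.
  have v2' : valid h2' by apply: valid_ext (vm [:: c]) => a; rewrite /mix /h2' /upd inE; case: eqP => [->|].
  have := @CI R nu Hval Hbd _ _ _ v2 v2'.
  rewrite big_cons => hc hs.
  have ES : \sum_(j <- cs) (phi j (h1 j) - phi j (h2' j)) =
            \sum_(j <- cs) (phi j (h1 j) - phi j (h2 j)).
    apply: eq_big_seq => j jcs; rewrite /h2' /upd; case: (eqVneq j c) => // ejc.
    by move: ncs; rewrite -ejc jcs.
  rewrite ES /h2' in hs; lra.
Qed.


Definition hj (k k' : nat -> option nat) M j :=
  fun c => if (c < M)%N then omap (maxn j) (k c) else k' c.
Definition kcut (k' : nat -> option nat) M :=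
  fun c => if (c < M)%N then None else k' c.

Lemma valid_hi h M : (forall a n, h a = Some n -> (M <= n)%N) ->
  (forall c, (M <= c)%N -> h c != None) -> valid h.
Proof. move=> H1 H2 a n E c nc; apply: H2; exact: leq_trans (H1 _ _ E) nc. Qed.

Variables (k k' : nat -> option nat) (M : nat).
Hypothesis vk : valid k.
Hypothesis Hk' : forall c, (M <= c)%N -> exists v, k' c = Some v /\ (M <= v)%N.

Lemma valid_P h :
  (forall c, (c < M)%N -> (k c = None -> h c = None) /\
     (forall n, k c = Some n -> exists m, h c = Some m /\ (n <= m)%N)) ->
  (forall c, (M <= c)%N -> h c = k' c) -> valid h.
Proof.
move=> H1 H2 a v E c vc; case: (ltnP c M) => cM.
- case: (ltnP a M) => aM.
  + have [Hn Hs] := H1 a aM; case E': (k a) => [n|]; last by rewrite Hn in E.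
    have [m [Em nm]] := Hs n E'; rewrite E in Em; case: Em => <- in nm.
    have := vk _ _ E' c (leq_trans nm vc).
    have [Hn' Hs'] := H1 c cM; case E'': (k c) => [n'|] // _.
    by have [m' [-> _]] := Hs' n' E''.
  + rewrite H2 // in E; have [v' [Ev' Mv']] := Hk' _ aM; rewrite Ev' in E.
    case: E => evv; subst v'; move: (leq_trans Mv' vc); rewrite leqNgt cM.
    by [].
- by rewrite H2 //; have [v' [-> _]] := Hk' _ cM.
Qed.

Lemma notin_iota c : c \notin iota 0 M -> (M <= c)%N.
Proof. by rewrite mem_iota add0n /= -leqNgt. Qed.

Lemma level_step j : L (hj k k' M j) - L (hj k k' M j.+1) =
  \sum_(c <- iota 0 M) (phi c (hj k k' M j c) - phi c (hj k k' M j.+1 c)).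
Proof.
apply: TL; first exact: iota_uniq.
- by move=> c /notin_iota cM; rewrite /hj ltnNge cM.
- move=> s; apply: valid_P.
  + move=> c cM; rewrite /mix /hj cM; split.
    * by move=> ->; case: (c \in s).
    * move=> n ->; case: (c \in s) => /=; [exists (maxn j n) | exists (maxn j.+1 n)]; split => //; exact: leq_maxr.
  + by move=> c Mc; rewrite /mix /hj ltnNge Mc /=; case: (c \in s).
Qed.

Lemma levels d j : L (hj k k' M j) - L (hj k k' M (j + d)) =
  \sum_(c <- iota 0 M) (phi c (hj k k' M j c) - phi c (hj k k' M (j + d) c)).
Proof.
elim: d j => [|d IH] j.
- rewrite addn0 subrr big1_seq // => c _; lra.
- have := IH j.+1; have := level_step j; rewrite addnS -addSn => h1 h2.
  have -> : L (hj k k' M j) - L (hj k k' M (j.+1 + d)) =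
    (L (hj k k' M j) - L (hj k k' M j.+1)) + (L (hj k k' M j.+1) - L (hj k k' M (j.+1 + d))) by lra.
  rewrite h1 h2 -big_split /=; apply: eq_bigr => c _; lra.
Qed.

Lemma phase1 : L (hj k k' M M) - L (kcut k' M) =
  \sum_(c <- iota 0 M) (phi c (hj k k' M M c) - phi c (kcut k' M c)).
Proof.
apply: TL; first exact: iota_uniq.
- by move=> c /notin_iota cM; rewrite /hj /kcut ltnNge cM.
- move=> s; apply: (@valid_hi _ M).
  + move=> a n; rewrite /mix /hj /kcut; case: (ltnP a M) => aM.
    * case: (a \in s) => //; case: (k a) => //= m [<-]; exact: leq_maxl.
    * by have [v [-> Mv]] := Hk' _ aM; case: (a \in s) => -[<-].
  + move=> c Mc; rewrite /mix /hj /kcut ltnNge Mc /=.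
    by have [v [-> _]] := Hk' _ Mc; case: (c \in s).
Qed.

Lemma KI : L (hj k k' M 0) - L (kcut k' M) =
  \sum_(c <- iota 0 M) (phi c (k c) - phi c None).
Proof.
have := levels M 0; have := phase1; rewrite add0n => h1 h2.
have -> : L (hj k k' M 0) - L (kcut k' M) =
  (L (hj k k' M 0) - L (hj k k' M M)) + (L (hj k k' M M) - L (kcut k' M)) by lra.
rewrite h1 h2 -big_split /=; apply: eq_big_seq => c.
rewrite mem_iota add0n /= => cM; rewrite /hj /kcut cM.
have -> : omap (maxn 0) (k c) = k c by case: (k c) => //= n; rewrite max0n.
lra.
Qed.

End Tele.


Section Mass.
Variable R : realType.
Variable nu : set J -> \bar R.
Hypothesis Hval : valuationJ nu.
Hypothesis Hbd : bounded_valJ nu.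
Local Notation L := (@L R nu).
Local Notation phi := (@phi R nu).

Lemma phi_mono c x y : ole x y -> phi c y <= phi c x.
Proof.
move=> xy; apply: L_mono => //; try exact: valid_base_upd.
by move=> a; rewrite /upd; case: (a == c) => //; exact: ole_refl.
Qed.

Definition mfin c n := phi c (Some n) - phi c (Some n.+1).
Definition phiinf c := inf (range (fun K => phi c (Some K))).
Definition minf c := phiinf c - phi c None.
Definition mass (p : J) : R :=
  let: (c, o) := p in match o with Some n => mfin c n | None => minf c end.

Lemma mfin_ge0 c n : 0 <= mfin c n.
Proof. rewrite /mfin subr_ge0; apply: phi_mono => /=; exact: leqnSn. Qed.

Lemma has_lb c : has_lbound (range (fun K => phi c (Some K))).
Proof. exists (phi c None) => _ [K _ <-]; apply: phi_mono; exact: ole_None. Qed.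

Lemma phiinf_ge c : phi c None <= phiinf c.
Proof.
apply: lb_le_inf; first by exists (phi c (Some 0%N)), 0%N.
by move=> _ [K _ <-]; apply: phi_mono; exact: ole_None.
Qed.

Lemma phiinf_le c K : phiinf c <= phi c (Some K).
Proof. by apply: (ge_inf (has_lb c)); exists K. Qed.

Lemma minf_ge0 c : 0 <= minf c.
Proof. rewrite /minf subr_ge0; exact: phiinf_ge. Qed.

Lemma mass_ge0 p : 0 <= mass p.
Proof. case: p => c [n|]; [exact: mfin_ge0 | exact: minf_ge0]. Qed.

Lemma tele c n K : (n <= K)%N ->
  \sum_(n <= m < K) mfin c m = phi c (Some n) - phi c (Some K).
Proof.
move=> nK; rewrite (telescope_sumr_eq (fun m => - phi c (Some m))) //; first lra.
by move=> m _; rewrite /mfin; lra.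
Qed.

Definition colc (U : set J) c K :=
  \sum_(0 <= m < K) (if `[< U (c, Some m) >] then mfin c m else 0) +
  (if `[< U (c, None) >] then minf c else 0).

Lemma sum_ind c n K : (n <= K)%N ->
  \sum_(0 <= m < K) (if (n <= m)%N then mfin c m else 0) =
  \sum_(n <= m < K) mfin c m.
Proof.
move=> nK; rewrite (big_cat_nat (leq0n n) nK) /=.
rewrite big1_seq ?add0r; last first.
  move=> m; rewrite mem_index_iota => /andP[_ mn]; case: ifP => // nm; move: mn nm; lia.
apply: eq_big_nat => m /andP[nm _]; by rewrite nm.
Qed.

Lemma ifT_asb (P : Prop) (T : Type) (a b : T) : P -> (if `[< P >] then a else b) = a.
Proof. by case: asboolP. Qed.
Lemma ifF_asb (P : Prop) (T : Type) (a b : T) : ~ P -> (if `[< P >] then a else b) = b.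
Proof. by case: asboolP. Qed.

Lemma colc_Sh k c K : colc (Sh k) c K =
  match k c with
  | None => 0
  | Some n => \sum_(0 <= m < K) (if (n <= m)%N then mfin c m else 0) + minf c
  end.
Proof.
rewrite /colc /=; case: (k c) => [n|] /=.
- rewrite ifT_asb //; congr (_ + _).
  by apply: eq_bigr => m _; case: (n <= m)%N; [rewrite ifT_asb | rewrite ifF_asb].
- rewrite ifF_asb // addr0 big1 //= => m _; by rewrite ifF_asb.
Qed.

Lemma colc_le k c K : colc (Sh k) c K <= phi c (k c) - phi c None.
Proof.
rewrite colc_Sh; case: (k c) => [n|]; last lra.
pose K' := maxn K n.
have le1 : \sum_(0 <= m < K) (if (n <= m)%N then mfin c m else 0) <=
           \sum_(0 <= m < K') (if (n <= m)%N then mfin c m else 0).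
  rewrite (big_cat_nat (leq0n K) (leq_maxl K n)) /= lerDl.
  apply: sumr_ge0 => m _; case: ifP => _ //; exact: mfin_ge0.
rewrite (@sum_ind c n K' (leq_maxr K n)) in le1.
rewrite (@tele c n K' (leq_maxr K n)) in le1.
have := phiinf_le c K'; rewrite /minf; lra.
Qed.

Lemma colc_ge0 U c K : 0 <= colc U c K.
Proof.
apply: addr_ge0.
- apply: sumr_ge0 => m _; case: ifP => _ //; exact: mfin_ge0.
- case: ifP => _ //; exact: minf_ge0.
Qed.

Lemma colc_ge k c d : 0 < d -> exists K0, forall K, (K0 <= K)%N ->
  phi c (k c) - phi c None <= colc (Sh k) c K + d.
Proof.
move=> d0; case E: (k c) => [n|]; last first.
  by exists 0%N => K _; rewrite colc_Sh E; lra.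
have [_ [K1 _ <-] K1lt] := inf_adherent d0 (conj (ex_intro _ _ (ex_intro2 _ _ 0%N I erefl)) (has_lb c)).
exists (maxn n K1) => K KK; rewrite colc_Sh E sum_ind; last exact: leq_trans (leq_maxl _ _) KK.
rewrite tele; last exact: leq_trans (leq_maxl _ _) KK.
have := phi_mono c (Some K1) (Some K) (leq_trans (leq_maxr _ _) KK).
rewrite /minf -/(phiinf c) in K1lt |- *; lra.
Qed.

End Mass.


Definition nonemp (h : nat -> option nat) := exists a, h a != None.
Definition kM (k k' : nat -> option nat) M :=
  fun c => if (c < M)%N then k c else k' c.

Lemma idv_valid : valid (fun c => Some c).
Proof. by move=> a n _ c _. Qed.

Lemma nonemp_N h : valid h -> nonemp h ->
  exists N, forall c, (N <= c)%N -> h c != None.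
Proof.
move=> v [a]; case E: (h a) => [n|] // _; exists n => c; exact: (v a n E c).
Qed.

Arguments nonemp_N {h}.
Lemma valid_kM k k' M : valid k -> hle k k' ->
  (forall c, (M <= c)%N -> k' c != None) -> valid (kM k k' M).
Proof.
move=> vk kk' Hk' a v; rewrite /kM => E c vc.
case: (ltnP c M) => cM; last by apply: Hk'.
have [n [En nv]] : exists n, k a = Some n /\ (n <= v)%N.
  case: (ltnP a M) E => aM E.
  - by exists v; split.
  - move: (kk' a); rewrite E; case: (k a) => [n|] //= nv; by exists n.
exact: vk a n En c (leq_trans nv vc).
Qed.

Lemma hle_kM k k' M M' : hle k k' -> (M <= M')%N -> hle (kM k k' M') (kM k k' M).
Proof.
move=> kk' MM' c; rewrite /kM; case: (ltnP c M) => cM.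
- by rewrite (leq_trans cM MM'); exact: ole_refl.
- case: (c < M')%N => //; exact: ole_refl.
Qed.

Lemma hle_k_kM k k' M : hle k k' -> hle k (kM k k' M).
Proof. move=> kk' c; rewrite /kM; case: (c < M)%N => //; exact: ole_refl. Qed.

Lemma omax_Some_ge x c : x != None -> exists v, omax x (Some c) = Some v /\ (c <= v)%N.
Proof.
case: x => [n|] // _; rewrite /omax /=; case: ifP => nc.
- by exists c.
- by exists n; split => //; move: nc; lia.
Qed.

Arguments omax_Some_ge {x}.
Section Main.
Variable R : realType.
Variable nu : set J -> \bar R.
Hypothesis Hval : valuationJ nu.
Hypothesis Hcont : continuous_valJ nu.
Hypothesis Hbd : bounded_valJ nu.
Local Notation L := (@L R nu).
Local Notation phi := (@phi R nu).
Local Notation colc := (@colc R nu).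

Definition C0 := inf [set x : R | exists h, [/\ valid h, nonemp h & x = L h]].

Lemma C0_hlb : has_lbound [set x : R | exists h, [/\ valid h, nonemp h & x = L h]].
Proof. by exists 0 => _ [h [v _ ->]]; exact: L_ge0. Qed.

Lemma C0_le h : valid h -> nonemp h -> C0 <= L h.
Proof. by move=> v ne; apply: (ge_inf C0_hlb); exists h. Qed.

Lemma C0_adh e : 0 < e -> exists h, [/\ valid h, nonemp h & L h < C0 + e].
Proof.
move=> e0.
have ne : [set x : R | exists h, [/\ valid h, nonemp h & x = L h]] !=set0.
  exists (L (fun c => Some c)), (fun c => Some c); split; [exact: idv_valid | by exists 0%N | by []].
have [_ [h [v nh ->]] lt] := inf_adherent e0 (conj ne C0_hlb).
by exists h.
Qed.

Lemma cont_step k k' N0 : valid k -> hle k k' ->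
  (forall c, (N0 <= c)%N -> k' c != None) ->
  forall e, 0 < e -> exists M, (N0 <= M)%N /\ L k - e < L (kM k k' M).
Proof.
move=> vk kk' Hk' e e0.
have vM : forall M, (N0 <= M)%N -> valid (kM k k' M).
  move=> M NM; apply: valid_kM => // c Mc; apply: Hk'; exact: leq_trans NM Mc.
pose F := [set Sh (kM k k' M) | M in [set M | (N0 <= M)%N]].
have oF : forall U, F U -> openJ U.
  by move=> U [M NM <-]; apply: open_Sh; exact: vM.
have dF : directed_set (fun U V => U `<=` V) F.
  split; first by exists (Sh (kM k k' N0)); exists N0 => //=; exact: leqnn.
  move=> _ _ [M1 NM1 <-] [M2 NM2 <-].
  exists (Sh (kM k k' (maxn M1 M2))); split.
    exists (maxn M1 M2) => //; exact: leq_trans NM1 (leq_maxl _ _).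
  split; apply: Sh_sub; apply: hle_kM => //; [exact: leq_maxl | exact: leq_maxr].
have bF : \bigcup_(U in F) U = Sh k.
  apply/seteqP; split.
  - move=> p [_ [M NM <-]] Up; exact: (Sh_sub _ _ (hle_k_kM k k' M kk') p Up).
  - move=> [a b] Hp; exists (Sh (kM k k' (maxn N0 a.+1))).
      exists (maxn N0 a.+1) => //; exact: leq_maxl.
    have : kM k k' (maxn N0 a.+1) a = k a.
      by rewrite /kM (leq_trans (ltnSn a) (leq_maxr _ _)).
    by move=> ea; case: b Hp => [m|] /=; rewrite ea.
have := Hcont F oF dF; rewrite bF => hsup.
have fin : ereal_sup (nu @` F) \is a fin_num by rewrite -hsup nu_L.
have [_ [U [M NM <-] <-] lt] := ub_ereal_sup_adherent e0 fin.
exists M; split => //.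
by move: lt; rewrite -hsup !nu_L //; try exact: vM; rewrite -EFinB lte_fin.
Qed.

Definition gsum (U : set J) M K := \sum_(0 <= c < M) colc U c K.

Lemma gsum_ge0 U M K : 0 <= gsum U M K.
Proof. apply: sumr_ge0 => c _; exact: colc_ge0. Qed.

Lemma UB k : valid k -> nonemp k -> forall M K, gsum (Sh k) M K <= L k - C0.
Proof.
move=> vk nk M K; have [N HN] := nonemp_N vk nk.
pose M' := maxn M N.
pose k' := hmax k (fun c => Some c).
have Hk' : forall c, (M' <= c)%N -> exists v, k' c = Some v /\ (M' <= v)%N.
  move=> c Mc; have [v [Ev cv]] := omax_Some_ge c (HN c (leq_trans (leq_maxr M N) Mc)).
  by exists v; split => //; exact: leq_trans Mc cv.
have KIe := @KI R nu Hval Hbd _ _ _ vk Hk'.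
have vh0 : valid (hj k k' M' 0).
  apply: (@valid_P _ _ _ vk Hk').
  - move=> c cM; rewrite /hj cM; split; first by move=> ->.
    by move=> n ->; exists n; split => //=; rewrite max0n.
  - by move=> c Mc; rewrite /hj ltnNge Mc.
have le1 : L (hj k k' M' 0) <= L k.
  apply: L_mono => // c; rewrite /hj; case: (c < M')%N.
  - by case: (k c) => [n|] //=; rewrite max0n leqnn.
  - exact: ole_omax_l.
have vcut : valid (kcut k' M').
  apply: (@valid_hi _ M').
  - move=> a n; rewrite /kcut; case: (ltnP a M') => // aM.
    by have [v [-> Mv]] := Hk' a aM => -[<-].
  - move=> c Mc; rewrite /kcut ltnNge Mc /=.
    by have [v [-> _]] := Hk' c Mc.
have le2 : C0 <= L (kcut k' M').
  apply: C0_le => //; exists M'; rewrite /kcut ltnn.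
  by have [v [-> _]] := Hk' M' (leqnn _).
have le3 : gsum (Sh k) M K <= gsum (Sh k) M' K.
  rewrite /gsum (big_cat_nat (leq0n M) (leq_maxl M N)) /= lerDl.
  apply: sumr_ge0 => c _; exact: colc_ge0.
have le4 : gsum (Sh k) M' K <= \sum_(c <- iota 0 M') (phi c (k c) - phi c None).
  rewrite /gsum /index_iota subn0; apply: ler_sum => c _; exact: colc_le.
lra.
Qed.

Lemma unif_K (P : nat -> nat -> Prop) :
  (forall c, exists K0, forall K, (K0 <= K)%N -> P c K) ->
  forall M, exists K0, forall c, (c < M)%N -> forall K, (K0 <= K)%N -> P c K.
Proof.
move=> H; elim=> [|M [K1 IH]]; first by exists 0%N.
have [K2 H2] := H M.
exists (maxn K1 K2) => c; rewrite ltnS leq_eqVlt => /orP[/eqP ->|cM] K KK.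
- apply: H2; exact: leq_trans (leq_maxr _ _) KK.
- apply: IH => //; exact: leq_trans (leq_maxl _ _) KK.
Qed.

Lemma LB k : valid k -> nonemp k -> forall e, 0 < e ->
  exists M K, L k - C0 <= gsum (Sh k) M K + e.
Proof.
move=> vk nk e e0.
pose e3 := e / 3%:R.
have e30 : 0 < e3 by rewrite /e3 divr_gt0.
have [h0 [vh0 nh0 lth0]] := C0_adh e3 e30.
pose k' := hmax (hmax k h0) (fun c => Some c).
have vk' : valid k' by apply: valid_max; [apply: valid_max | exact: idv_valid].
have [Nk HNk] := nonemp_N vk nk.
have [Nh HNh] := nonemp_N vh0 nh0.
pose N0 := maxn Nk Nh.
have Hk'0 : forall c, (N0 <= c)%N -> exists v, k' c = Some v /\ (c <= v)%N.
  move=> c Nc; apply: omax_Some_ge.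
  have := HNk c (leq_trans (leq_maxl _ _) Nc); have := HNh c (leq_trans (leq_maxr _ _) Nc).
  by rewrite /hmax /omax; case: ifP; case: (k c); case: (h0 c).
have kk' : hle k k' by move=> c; apply: ole_trans (ole_omax_l _ _) (ole_omax_l _ _).
have [M [NM ltM]] : exists M, (N0 <= M)%N /\ L k - e3 < L (kM k k' M).
  apply: cont_step => // c Nc; have [v [-> _]] := Hk'0 c Nc; by [].
have Hk' : forall c, (M <= c)%N -> exists v, k' c = Some v /\ (M <= v)%N.
  move=> c Mc; have [v [Ev cv]] := Hk'0 c (leq_trans NM Mc).
  by exists v; split => //; exact: leq_trans Mc cv.
have KIe := @KI R nu Hval Hbd _ _ _ vk Hk'.
have eM : L (kM k k' M) = L (hj k k' M 0).
  apply: L_ext => c; rewrite /kM /hj; case: (c < M)%N => //.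
  by case: (k c) => //= n; rewrite max0n.
have vcut : valid (kcut k' M).
  apply: (@valid_hi _ M).
  - move=> a n; rewrite /kcut; case: (ltnP a M) => // aM.
    by have [v [-> Mv]] := Hk' a aM => -[<-].
  - move=> c Mc; rewrite /kcut ltnNge Mc /=.
    by have [v [-> _]] := Hk' c Mc.
have le2 : L (kcut k' M) <= L h0.
  apply: L_mono => // c; rewrite /kcut; case: (c < M)%N; first exact: ole_None.
  apply: ole_trans (ole_omax_r _ _) (ole_omax_l _ _).
pose d := e3 / (M.+1)%:R.
have d0 : 0 < d by rewrite /d divr_gt0 // ltr0n.
have [K HK] := @unif_K (fun c K => phi c (k c) - phi c None <= colc (Sh k) c K + d) (fun c => @colc_ge R nu Hval Hbd k c d d0) M.
exists M, K.
have le3 : \sum_(c <- iota 0 M) (phi c (k c) - phi c None) <=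
           gsum (Sh k) M K + M%:R * d.
  have -> : M%:R * d = \sum_(0 <= c < M) d by rewrite sumr_const_nat subn0 mulr_natl.
  rewrite /gsum -big_split /index_iota subn0 /= !big_seq; apply: ler_sum => c; rewrite mem_iota /= add0n => cM.
  exact: HK.
have le4 : M%:R * d <= e3.
  have -> : e3 = (M.+1)%:R * d by rewrite /d mulrC divfK // pnatr_eq0.
  apply: ler_wpM2r; first exact: ltW.
  by rewrite ler_nat.
have he : e = 3%:R * e3 by rewrite /e3 mulrC divfK // pnatr_eq0.
rewrite eM in ltM; lra.
Qed.

End Main.


Definition gridseq M K : seq J :=
  [seq (c, o) | c <- iota 0 M, o <- None :: map Some (iota 0 K)].

Lemma grid_uniq M K : uniq (gridseq M K).
Proof.
apply: allpairs_uniq; first exact: iota_uniq.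
- rewrite cons_uniq map_inj_uniq ?iota_uniq ?andbT; last by move=> x y [].
  by apply/mapP => -[x _].
- by move=> [a b] [c d] _ _ /= [-> ->].
Qed.

Lemma mem_grid M K c o : ((c, o) \in gridseq M K) =
  (c < M)%N && (match o with None => true | Some m => (m < K)%N end).
Proof.
apply/allpairsP/andP => [[[c' o'] [/= c'M o'in [-> ->]]]|[cM oK]].
- split; first by move: c'M; rewrite mem_iota add0n.
  move: o'in; rewrite in_cons; case: o' => [m|] //= /mapP [m' m'in [->]].
  by move: m'in; rewrite mem_iota add0n.
- exists (c, o); split => //=; first by rewrite mem_iota add0n.
  rewrite in_cons; case: o oK => [m|] //= mK; apply/mapP; exists m => //.
  by rewrite mem_iota add0n.
Qed.

Lemma grid_bound (s : seq J) : exists M K, {subset s <= gridseq M K}.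
Proof.
elim: s => [|[c o] s [M [K IH]]]; first by exists 0%N, 0%N.
exists (maxn M c.+1), (maxn K (if o is Some m then m.+1 else 0%N)).
move=> [c' o']; rewrite in_cons => /orP[/eqP [ec eo]|ins]; first subst c' o'.
- rewrite mem_grid; apply/andP; split; first by rewrite leq_max ltnSn orbT.
  by case: o => // m; rewrite leq_max ltnSn orbT.
- move: (IH _ ins); rewrite !mem_grid => /andP[cM oK]; clear ins; apply/andP; split.
  + by rewrite leq_max cM.
  + by move: oK; case: o' => // m mK; rewrite leq_max mK.
Qed.

Lemma nat_bound (s : seq nat) : exists n, forall i, i \in s -> (i < n)%N.
Proof.
elim: s => [|a s [n IH]]; first by exists 0%N.
exists (maxn n a.+1) => i; rewrite in_cons => /orP[/eqP ->|ins].
- by rewrite leq_max ltnSn orbT.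
- by rewrite leq_max IH.
Qed.

Lemma sub_sum (R : realType) (I : eqType) (s t : seq I) (F : I -> R) :
  uniq s -> uniq t -> {subset s <= t} -> (forall i, 0 <= F i) ->
  \sum_(i <- s) F i <= \sum_(i <- t) F i.
Proof.
move=> us ut st F0.
rewrite -(perm_big _ (permEl (perm_filterC (mem s) t))) big_cat /=.
have -> : \sum_(i <- [seq x <- t | mem s x]) F i = \sum_(i <- s) F i.
  apply: perm_big; apply: uniq_perm; first exact: filter_uniq.
  - exact: us.
  - move=> x; rewrite mem_filter /=; apply/andP/idP => [[]//|xs]; split => //.
    exact: st.
rewrite lerDl; exact: sumr_ge0.
Qed.

Section Final.
Variable R : realType.
Variable nu : set J -> \bar R.
Hypothesis Hval : valuationJ nu.
Hypothesis Hcont : continuous_valJ nu.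
Hypothesis Hbd : bounded_valJ nu.
Local Notation mass := (@mass R nu).
Local Notation L := (@L R nu).
Local Notation C0 := (@C0 R nu).
Local Notation gsum := (@gsum R nu).

Definition gU (U : set J) (p : J) : R := if `[< U p >] then mass p else 0.

Lemma gU_ge0 U p : 0 <= gU U p.
Proof. rewrite /gU; case: ifP => _ //; exact: (@mass_ge0 R nu Hval Hbd). Qed.

Lemma gsum_grid U M K : gsum U M K = \sum_(p <- gridseq M K) gU U p.
Proof.
rewrite /gsum /gridseq big_allpairs /index_iota subn0; apply: eq_bigr => c _.
by rewrite big_cons big_map /colc addrC /index_iota subn0.
Qed.

Definition rr i := if pickle_inv i is Some p then mass p else 0.
Definition xx i : J := odflt (0%N, None) (pickle_inv i).
Definition w U i := if pickle_inv i is Some p then gU U p else 0.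

Lemma w_ge0 U i : 0 <= w U i.
Proof. rewrite /w; case: (pickle_inv i) => // p; exact: gU_ge0. Qed.

Lemma rr_ge0 i : 0 <= rr i.
Proof. rewrite /rr; case: (pickle_inv i) => // p; exact: (@mass_ge0 R nu Hval Hbd). Qed.

Lemma term_eq U i : ((rr i)%:E * diracJ (xx i) U)%E = (w U i)%:E.
Proof.
rewrite /rr /xx /w /diracJ /gU; case: (pickle_inv i) => [p|] /=;
  case: asboolP => _; by rewrite ?mule1 ?mule0.
Qed.

Lemma partial_eq U n :
  (\sum_(i < n) ((rr i)%:E * diracJ (xx i) U))%E = (\sum_(i <- iota 0 n) w U i)%:E.
Proof.
rewrite (eq_bigr (fun i : 'I_n => (w U i)%:E)); last by move=> i _; exact: term_eq.
by rewrite sumEFin -(big_mkord xpredT (w U)) /index_iota subn0.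
Qed.

Lemma sum_w_grid U M K : \sum_(p <- gridseq M K) gU U p =
  \sum_(i <- map pickle (gridseq M K)) w U i.
Proof. by rewrite big_map; apply: eq_bigr => p _; rewrite /w pickleK_inv. Qed.

Lemma map_pickle_uniq M K : uniq (map pickle (gridseq M K)).
Proof. rewrite map_inj_uniq ?grid_uniq //; exact: pcan_inj pickleK_inv. Qed.

Lemma partial_le_grid U n : exists M K,
  \sum_(i <- iota 0 n) w U i <= \sum_(p <- gridseq M K) gU U p.
Proof.
have [M [K sub]] := grid_bound (pmap pickle_inv (iota 0 n)).
exists M, K; rewrite sum_w_grid.
rewrite (bigID (fun i => @pickle_inv J i != None)) /=.
rewrite [X in _ + X]big1; last first.
  by move=> i /negPn /eqP; rewrite /w => ->.
rewrite addr0 -big_filter; apply: sub_sum.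
- apply: filter_uniq; exact: iota_uniq.
- exact: map_pickle_uniq.
- move=> i; rewrite mem_filter => /andP[]; case E: (pickle_inv i) => [p|] // _ iin.
  have pin : p \in pmap pickle_inv (iota 0 n) by rewrite mem_pmap; apply/mapP; exists i; rewrite ?E.
  have := @pickle_invK J i; rewrite E /= => <-; apply: map_f; exact: sub.
- exact: w_ge0.
Qed.

Lemma grid_le_partial U M K : exists n,
  \sum_(p <- gridseq M K) gU U p <= \sum_(i <- iota 0 n) w U i.
Proof.
have [n Hn] := nat_bound (map pickle (gridseq M K)).
exists n; rewrite sum_w_grid; apply: sub_sum.
- exact: map_pickle_uniq.
- exact: iota_uniq.
- by move=> i iin; rewrite mem_iota add0n /= Hn.
- exact: w_ge0.
Qed.

Lemma disc_eq k : valid k -> nonemp k -> discrete_valJ rr xx (Sh k) = (L k - C0)%:E.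
Proof.
move=> vk nk; apply/eqP; rewrite eq_le; apply/andP; split.
- apply: ge_ereal_sup => _ [n _ <-]; rewrite partial_eq lee_fin.
  have [M [K le]] := partial_le_grid (Sh k) n.
  apply: le_trans le _; rewrite -gsum_grid; exact: (@UB R nu Hval Hbd).
- apply/lee_addgt0Pr => e e0.
  have [M [K le]] := @LB R nu Hval Hcont Hbd k vk nk e e0.
  have [n len] := grid_le_partial (Sh k) M K.
  apply: (@le_trans _ _ ((\sum_(i <- iota 0 n) w (Sh k) i) + e)%:E).
    rewrite lee_fin; rewrite gsum_grid in le; lra.
  rewrite EFinD; apply: leeD2r; apply: ereal_sup_ubound; exists n => //.
  exact: partial_eq.
Qed.

End Final.


Lemma empty_case k : ~ nonemp k -> Sh k = set0.
Proof.
move=> nk; apply/funext => -[a b]; apply/propext; split => // H; apply: nk; exists a.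
by move: H => /=; case: b => [m|] //; apply: ole_Some_ne.
Qed.

Theorem theorem3p4 (R : realType) (nu : set J -> \bar R) :
  valuationJ nu -> continuous_valJ nu -> bounded_valJ nu ->
  point_continuousJ nu /\
  exists (r : nat -> R) (x : nat -> J) (c : R),
    (forall i, 0 <= r i) /\ 0 <= c /\
    forall U : set J, openJ U ->
      nu U = (discrete_valJ r x U + c%:E * muJ U)%E.
Proof.
move=> Hval Hcont Hbd.
have nu0 : nu set0 = 0%E by case: Hval.
have C0ge0 : 0 <= C0 R nu.
  apply: lb_le_inf.
    exists (L R nu (fun c => Some c)), (fun c => Some c); split; [exact: idv_valid | by exists 0%N | by []].
  by move=> _ [h [v _ ->]]; exact: (L_ge0 _ _ Hval Hbd _ v).
split.
- move=> U r oU r0 rlt.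
  have [vk eU] := Sh_of_open _ oU.
  have nk : nonemp (hU U).
    apply: contrapT => nk; move: rlt; rewrite eU empty_case // nu0 lte_fin.
    by rewrite ltNge r0.
  rewrite eU (nu_L _ _ Hval Hbd _ vk) lte_fin in rlt.
  pose e := (L R nu (hU U) - r) / 2%:R.
  have e0 : 0 < e by rewrite /e divr_gt0 // subr_gt0.
  have [M [K le]] := LB _ _ Hval Hcont Hbd _ vk nk _ e0.
  have [a Ha] := nk.
  pose A := [set` (a, None) :: [seq p <- gridseq M K | `[< Sh (hU U) p >]]].
  exists A; split; first by apply/finite_seqP; eexists.
  split.
  + have HU : Sh (hU U) `<=` U by move=> p; rewrite -eU.
    move=> p; rewrite /A /= in_cons => /orP[/eqP ->|]; first exact: HU.
    by rewrite mem_filter => /andP[/asboolP /HU].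
  + move=> V oV AV.
    have [vV eV] := Sh_of_open _ oV.
    have nV : nonemp (hU V).
      exists a; have : V (a, None) by apply: AV; rewrite /A /= in_cons eqxx.
      by rewrite {1}eV.
    rewrite eV (nu_L _ _ Hval Hbd _ vV) lte_fin.
    have ub := UB _ _ Hval Hbd _ vV nV M K.
    have mono : gsum R nu (Sh (hU U)) M K <= gsum R nu (Sh (hU V)) M K.
      rewrite !(gsum_grid R nu) !big_seq; apply: ler_sum => p pin.
      rewrite /gU; case: (asboolP (Sh (hU U) p)) => Hp.
      * have Vp : V p by apply: AV; rewrite /A /= in_cons mem_filter pin andbT; apply/orP; right; exact/asboolP.
        by rewrite eV in Vp; rewrite ifT_asb.
      * case: ifP => _ //; exact: (mass_ge0 _ _ Hval Hbd).
    have he : L R nu (hU U) = r + 2%:R * e by rewrite /e mulrC divfK ?pnatr_eq0 //; lra.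
    lra.
- exists (rr R nu), (xx), (C0 R nu); split; first exact: (rr_ge0 _ _ Hval Hbd).
  split => // U oU.
  have [vk eU] := Sh_of_open _ oU; rewrite eU.
  case: (pselect (nonemp (hU U))) => nk.
  + rewrite (disc_eq _ _ Hval Hcont Hbd _ vk nk) (nu_L _ _ Hval Hbd _ vk) /muJ ifT_asb.
      by rewrite mule1 -EFinD; congr EFin; lra.
    have [a Ha] := nk; exists (a, None) => /=; exact: Ha.
  + rewrite empty_case // nu0 /muJ ifF_asb; last by case.
    rewrite mule0 adde0; apply/eqP; rewrite eq_le; apply/andP; split.
    * apply: ereal_sup_ubound; exists 0%N => //; by rewrite big_ord0.
    * apply: ge_ereal_sup => _ [n _ <-]; rewrite partial_eq lee_fin.
      rewrite big1_seq // => i _; rewrite /w; case: (pickle_inv i) => // p.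
      by rewrite /gU ifF_asb.
Qed.
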